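(* Let $\mathbf{S}$ be any one of the four systems $\mathbf{G3N}$, $\mathbf{G3NeF}$, $\mathbf{G3CoPC}$, $\mathbf{G3MPC}$. The cut rule ''from $\Gamma\Rightarrow\alpha$ and $\Delta,\alpha\Rightarrow\varphi$ infer $\Gamma,\Delta\Rightarrow\varphi$'' is admissible in $\mathbf{S}$: for all finite multisets $\Gamma,\Delta$ and formulas $\alpha,\varphi$, if $\Gamma\Rightarrow\alpha$ and $\Delta,\alpha\Rightarrow\varphi$ are derivable in $\mathbf{S}$, then $\Gamma,\Delta\Rightarrow\varphi$ is derivable in $\mathbf{S}$.
   Context: Formulas are generated from a countable set of propositional variables $p,q,\dots$ and the constant $\top$ by the grammar $\varphi::= p\mid\top\mid\varphi\wedge\varphi\mid\varphi\vee\varphi\mid\varphi\to\varphi\mid\neg\varphi$ (there is no constant $\bot$). $\varphi\leftrightarrow\psi$ abbreviates $(\varphi\to\psi)\wedge(\psi\to\varphi)$. A sequent is an expression $\Gamma\Rightarrow\varphi$ where $\Gamma$ is a finite multiset of formulas and $\varphi$ is a formula (the goal); $\Gamma,\Delta$ denotes multiset union and $\Gamma,\alpha$ denotes $\Gamma$ with one more occurrence of $\alpha$. Rules ($p$ a propositional variable): (ax) $\Gamma,p\Rightarrow p$ (no premises); ($\top$) $\Gamma\Rightarrow\top$ (no premises); ($\to$r) from $\Gamma,\alpha\Rightarrow\beta$ infer $\Gamma\Rightarrow\alpha\to\beta$; ($\to$l) from $\Gamma,\alpha\to\beta\Rightarrow\alpha$ and $\Gamma,\beta\Rightarrow\varphi$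 infer $\Gamma,\alpha\to\beta\Rightarrow\varphi$; ($\wedge$r) from $\Gamma\Rightarrow\alpha$ and $\Gamma\Rightarrow\beta$ infer $\Gamma\Rightarrow\alpha\wedge\beta$; ($\wedge$l) from $\Gamma,\alpha,\beta\Rightarrow\varphi$ infer $\Gamma,\alpha\wedge\beta\Rightarrow\varphi$; ($\vee$r$_1$), ($\vee$r$_2$) from $\Gamma\Rightarrow\alpha$ (resp. $\Gamma\Rightarrow\beta$) infer $\Gamma\Rightarrow\alpha\vee\beta$; ($\vee$l) from $\Gamma,\alpha\Rightarrow\varphi$ and $\Gamma,\beta\Rightarrow\varphi$ infer $\Gamma,\alpha\vee\beta\Rightarrow\varphi$; (n) from $\Gamma,\neg\alpha,\beta\Rightarrow\alpha$ and $\Gamma,\neg\alpha,\alpha\Rightarrow\beta$ infer $\Gamma,\neg\alpha\Rightarrow\neg\beta$; (nef) from $\Gamma,\neg\alpha\Rightarrow\alpha$ infer $\Gamma,\neg\alpha\Rightarrow\neg\beta$; (copc) from $\Gamma,\neg\alpha,\beta\Rightarrow\alpha$ infer $\Gamma,\neg\alpha\Rightarrow\neg\beta$; (an) from $\Gamma,\alpha\Rightarrow\neg\alpha$ infer $\Gamma\Rightarrow\neg\alpha$. The rules (ax) through ($\vee$l) are the positive rules. The four systems are: $\mathbf{G3N}$ = positive rules + (n); $\mathbf{G3NeF}$ = positive rules + (n) + (nef); $\mathbf{G3CoPC}$ = positive rules + (copc); $\mathbf{G3MPC}$ = positive rules + (copc) + (an). None of them contains weakening, contraction or cut as a rule. A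 derivation is a finite tree of rule instances with leaves instances of (ax) or ($\top$); its height is the number of inference steps on a longest branch. A sequent is derivable if it has a derivation; a formula $\varphi$ is a theorem if $\Rightarrow\varphi$ (empty antecedent) is derivable. *)

(* Defs.v *)
(* Multisets of formulas are represented by lists considered
   up to permutation: derivability is closed under Permutation of the
   antecedent (a structural "rule" that is invisible at the multiset level). *)
From Stdlib Require Import List Permutation.
Import ListNotations.

Inductive form : Type :=
| Var : nat -> form
| Top : form
| And : form -> form -> form
| Or  : form -> form -> form
| Imp : form -> form -> form
| Neg : form -> form.

Inductive system : Type := G3N | G3NeF | G3CoPC | G3MPC.

Definition has_n (S : system) : bool :=
  match S with G3N | G3NeF => true | _ => false end.
Definition has_nef (S : system) : bool :=
  match S with G3NeF => true | _ => false end.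
Definition has_copc (S : system) : bool :=
  match S with G3CoPC | G3MPC => true | _ => false end.
Definition has_an (S : system) : bool :=
  match S with G3MPC => true | _ => false end.

Inductive derivable (S : system) : list form -> form -> Prop :=
| d_perm : forall G G' phi,
    Permutation G G' -> derivable S G phi -> derivable S G' phi
| d_ax : forall G p, derivable S (Var p :: G) (Var p)
| d_top : forall G, derivable S G Top
| d_impR : forall G a b,
    derivable S (a :: G) b -> derivable S G (Imp a b)
| d_impL : forall G a b phi,
    derivable S (Imp a b :: G) a -> derivable S (b :: G) phi ->
    derivable S (Imp a b :: G) phi
| d_andR : forall G a b,
    derivable S G a -> derivable S G b -> derivable S G (And a b)
| d_andL : forall G a b phi,
    derivable S (a :: b :: G) phi -> derivable S (And a b :: G) phi
| d_orR1 : forall G a b, derivable S G a -> derivable S G (Or a b)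
| d_orR2 : forall G a b, derivable S G b -> derivable S G (Or a b)
| d_orL : forall G a b phi,
    derivable S (a :: G) phi -> derivable S (b :: G) phi ->
    derivable S (Or a b :: G) phi
| d_n : forall G a b, has_n S = true ->
    derivable S (b :: Neg a :: G) a -> derivable S (a :: Neg a :: G) b ->
    derivable S (Neg a :: G) (Neg b)
| d_nef : forall G a b, has_nef S = true ->
    derivable S (Neg a :: G) a -> derivable S (Neg a :: G) (Neg b)
| d_copc : forall G a b, has_copc S = true ->
    derivable S (b :: Neg a :: G) a -> derivable S (Neg a :: G) (Neg b)
| d_an : forall G a, has_an S = true ->
    derivable S (a :: G) (Neg a) -> derivable S G (Neg a).

(* Main.v *)
Require Import Defs.
From Stdlib Require Import List Permutation Lia Arith.
Import ListNotations.

Lemma form_eq_dec : forall x y : form, {x = y} + {x <> y}.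
Proof. decide equality; apply Nat.eq_dec. Qed.

Ltac perm_solve :=
  let y := fresh "y" in
  apply (Permutation_count_occ form_eq_dec); intro y;
  repeat match goal with H : Permutation _ _ |- _ =>
    pose proof (proj1 (Permutation_count_occ form_eq_dec _ _) H y); clear H end;
  repeat (first [rewrite count_occ_app in * | progress simpl count_occ in *]);
  repeat match goal with
   | |- context [form_eq_dec ?a ?b] => destruct (form_eq_dec a b)
   | H : context [form_eq_dec ?a ?b] |- _ => destruct (form_eq_dec a b) end;
  lia.

Lemma perm_split : forall (x y : form) (G1 G2 : list form), Permutation (x::G1) (y::G2) ->
  (x = y /\ Permutation G1 G2) \/ (exists G3, Permutation G1 (y::G3) /\ Permutation G2 (x::G3)).
Proof.
  intros x y G1 G2 H. destruct (form_eq_dec x y) as [e|ne].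
  - subst; left; split; auto. eapply Permutation_cons_inv; eauto.
  - right. assert (Hi : In x (y::G2)) by (eapply Permutation_in; eauto; left; auto).
    destruct Hi as [e|Hi]; [congruence|]. apply in_split in Hi as [A [B ->]].
    exists (A++B); split; perm_solve.
Qed.

Section H.
Variable Sy : system.

Inductive hd : nat -> list form -> form -> Prop :=
| h_ax : forall n L G p, Permutation L (Var p :: G) -> hd n L (Var p)
| h_top : forall n L, hd n L Top
| h_impR : forall n G a b, hd n (a::G) b -> hd (S n) G (Imp a b)
| h_impL : forall n L G a b phi, Permutation L (Imp a b :: G) ->
    hd n (Imp a b :: G) a -> hd n (b::G) phi -> hd (S n) L phi
| h_andR : forall n G a b, hd n G a -> hd n G b -> hd (S n) G (And a b)
| h_andL : forall n L G a b phi, Permutation L (And a b :: G) ->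
    hd n (a::b::G) phi -> hd (S n) L phi
| h_orR1 : forall n G a b, hd n G a -> hd (S n) G (Or a b)
| h_orR2 : forall n G a b, hd n G b -> hd (S n) G (Or a b)
| h_orL : forall n L G a b phi, Permutation L (Or a b :: G) ->
    hd n (a::G) phi -> hd n (b::G) phi -> hd (S n) L phi
| h_n : forall n L G a b, has_n Sy = true -> Permutation L (Neg a :: G) ->
    hd n (b :: Neg a :: G) a -> hd n (a :: Neg a :: G) b -> hd (S n) L (Neg b)
| h_nef : forall n L G a b, has_nef Sy = true -> Permutation L (Neg a :: G) ->
    hd n (Neg a :: G) a -> hd (S n) L (Neg b)
| h_copc : forall n L G a b, has_copc Sy = true -> Permutation L (Neg a :: G) ->
    hd n (b :: Neg a :: G) a -> hd (S n) L (Neg b)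
| h_an : forall n G a, has_an Sy = true ->
    hd n (a :: G) (Neg a) -> hd (S n) G (Neg a).

Lemma hd_perm : forall n L phi, hd n L phi -> forall L', Permutation L L' -> hd n L' phi.
Proof.
  induction 1; intros L' HL.
  - apply h_ax with (G:=G); perm_solve.
  - apply h_top.
  - apply h_impR; apply IHhd; perm_solve.
  - apply h_impL with (G:=G) (a:=a) (b:=b); auto; perm_solve.
  - apply h_andR; auto.
  - apply h_andL with (G:=G) (a:=a) (b:=b); auto; perm_solve.
  - apply h_orR1; auto.
  - apply h_orR2; auto.
  - apply h_orL with (G:=G) (a:=a) (b:=b); auto; perm_solve.
  - apply h_n with (G:=G) (a:=a); auto; perm_solve.
  - apply h_nef with (G:=G) (a:=a); auto; perm_solve.
  - apply h_copc with (G:=G) (a:=a); auto; perm_solve.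
  - apply h_an; auto; apply IHhd; perm_solve.
Qed.

Lemma hd_mono : forall n L phi, hd n L phi -> forall m, n <= m -> hd m L phi.
Proof.
  induction 1; intros m Hm;
  try (destruct m as [|m]; [lia|]; assert (n <= m) by lia).
  - eapply h_ax; eauto.
  - apply h_top.
  - apply h_impR; auto.
  - eapply h_impL; eauto.
  - apply h_andR; auto.
  - eapply h_andL; eauto.
  - apply h_orR1; auto.
  - apply h_orR2; auto.
  - eapply h_orL; eauto.
  - eapply h_n; eauto.
  - eapply h_nef; eauto.
  - eapply h_copc; eauto.
  - eapply h_an; eauto.
Qed.

Lemma hd_weak : forall n L phi, hd n L phi -> forall x, hd n (x::L) phi.
Proof.
  induction 1; intro x.
  - apply h_ax with (G:=(x::G)); perm_solve.
  - apply h_top.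
  - apply h_impR; apply hd_perm with (x::a::G); auto; perm_solve.
  - apply h_impL with (G:=(x::G)) (a:=a) (b:=b); [perm_solve| |].
    + apply hd_perm with (x::Imp a b::G); auto; perm_solve.
    + apply hd_perm with (x::b::G); auto; perm_solve.
  - apply h_andR; auto.
  - apply h_andL with (G:=(x::G)) (a:=a) (b:=b); [perm_solve|].
    apply hd_perm with (x::a::b::G); auto; perm_solve.
  - apply h_orR1; auto.
  - apply h_orR2; auto.
  - apply h_orL with (G:=(x::G)) (a:=a) (b:=b); [perm_solve| |].
    + apply hd_perm with (x::a::G); auto; perm_solve.
    + apply hd_perm with (x::b::G); auto; perm_solve.
  - apply h_n with (G:=(x::G)) (a:=a); auto; [perm_solve| |].
    + apply hd_perm with (x::b::Neg a::G); auto; perm_solve.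
    + apply hd_perm with (x::a::Neg a::G); auto; perm_solve.
  - apply h_nef with (G:=(x::G)) (a:=a); auto; [perm_solve|].
    apply hd_perm with (x::Neg a::G); auto; perm_solve.
  - apply h_copc with (G:=(x::G)) (a:=a); auto; [perm_solve|].
    apply hd_perm with (x::b::Neg a::G); auto; perm_solve.
  - apply h_an; auto. apply hd_perm with (x::a::G); auto; perm_solve.
Qed.

Lemma hd_der : forall n L phi, hd n L phi -> derivable Sy L phi.
Proof.
  induction 1.
  - eapply d_perm; [apply Permutation_sym; eauto| apply d_ax].
  - apply d_top.
  - apply d_impR; auto.
  - eapply d_perm; [apply Permutation_sym; eauto| apply d_impL; auto].
  - apply d_andR; auto.
  - eapply d_perm; [apply Permutation_sym; eauto| apply d_andL; auto].
  - apply d_orR1; auto.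
  - apply d_orR2; auto.
  - eapply d_perm; [apply Permutation_sym; eauto| apply d_orL; auto].
  - eapply d_perm; [apply Permutation_sym; eauto| apply d_n; auto].
  - eapply d_perm; [apply Permutation_sym; eauto| apply d_nef; auto].
  - eapply d_perm; [apply Permutation_sym; eauto| apply d_copc; auto].
  - apply d_an; auto.
Qed.

Lemma der_hd : forall L phi, derivable Sy L phi -> exists n, hd n L phi.
Proof.
  induction 1;
  repeat match goal with H : exists _, _ |- _ => destruct H end.
  - eexists; eapply hd_perm; eauto.
  - exists 0; eapply h_ax; eauto.
  - exists 0; apply h_top.
  - eexists; apply h_impR; eauto.
  - exists (S (x + x0)); eapply h_impL; [apply Permutation_refl| |];
    eapply hd_mono; eauto; lia.
  - exists (S (x + x0)); eapply h_andR;
    eapply hd_mono; eauto; lia.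
  - eexists; eapply h_andL; eauto.
  - eexists; eapply h_orR1; eauto.
  - eexists; eapply h_orR2; eauto.
  - exists (S (x + x0)); eapply h_orL; [apply Permutation_refl| |];
    eapply hd_mono; eauto; lia.
  - exists (S (x + x0)); eapply h_n; [auto|apply Permutation_refl| |];
    eapply hd_mono; eauto; lia.
  - eexists; eapply h_nef; eauto.
  - eexists; eapply h_copc; eauto.
  - eexists; eapply h_an; eauto.
Qed.


Lemma inv_gen (X : form) (R : list form)
  (HX : forall p, X <> Var p) (HN : forall c, X <> Neg c)
  (Himp : forall a b, X = Imp a b -> R = [b])
  (Hand : forall a b, X = And a b -> R = [a;b])
  (Hor : forall a b, X = Or a b -> R = [a] \/ R = [b]) :
  forall n L phi, hd n L phi -> forall G' L', Permutation L (X::G') ->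
    Permutation L' (R ++ G') -> hd n L' phi.
Proof.
  induction 1; intros G' L' E1 E2.
  - destruct (perm_split _ _ _ _ (Permutation_trans (Permutation_sym H) E1))
      as [[e _]|[G3 [Ha Hb]]].
    + exfalso; apply (HX p); auto.
    + apply h_ax with (G := R ++ G3); perm_solve.
  - apply h_top.
  - apply h_impR. apply (IHhd (a::G') (a::L')); perm_solve.
  - destruct (perm_split _ _ _ _ (Permutation_trans (Permutation_sym H) E1))
      as [[e Hg]|[G3 [Ha Hb]]].
    + rewrite (Himp a b (eq_sym e)) in E2. apply hd_mono with n; [|lia].
      apply hd_perm with (b::G); auto. perm_solve.
    + apply h_impL with (G:=R++G3) (a:=a) (b:=b); [perm_solve| |].
      * apply (IHhd1 (Imp a b::G3)); perm_solve.
      * apply (IHhd2 (b::G3)); perm_solve.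
  - apply h_andR; [apply (IHhd1 G') | apply (IHhd2 G')]; auto.
  - destruct (perm_split _ _ _ _ (Permutation_trans (Permutation_sym H) E1))
      as [[e Hg]|[G3 [Ha Hb]]].
    + rewrite (Hand a b (eq_sym e)) in E2. apply hd_mono with n; [|lia].
      apply hd_perm with (a::b::G); auto. perm_solve.
    + apply h_andL with (G:=R++G3) (a:=a) (b:=b); [perm_solve|].
      apply (IHhd (a::b::G3)); perm_solve.
  - apply h_orR1; apply (IHhd G'); auto.
  - apply h_orR2; apply (IHhd G'); auto.
  - destruct (perm_split _ _ _ _ (Permutation_trans (Permutation_sym H) E1))
      as [[e Hg]|[G3 [Ha Hb]]].
    + destruct (Hor a b (eq_sym e)) as [e'|e']; rewrite e' in E2;
      apply hd_mono with n; try lia.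
      * apply hd_perm with (a::G); auto. perm_solve.
      * apply hd_perm with (b::G); auto. perm_solve.
    + apply h_orL with (G:=R++G3) (a:=a) (b:=b); [perm_solve| |].
      * apply (IHhd1 (a::G3)); perm_solve.
      * apply (IHhd2 (b::G3)); perm_solve.
  - destruct (perm_split _ _ _ _ (Permutation_trans (Permutation_sym H0) E1))
      as [[e Hg]|[G3 [Ha Hb]]].
    + exfalso; apply (HN a); auto.
    + apply h_n with (G:=R++G3) (a:=a); auto; [perm_solve| |].
      * apply (IHhd1 (b::Neg a::G3)); perm_solve.
      * apply (IHhd2 (a::Neg a::G3)); perm_solve.
  - destruct (perm_split _ _ _ _ (Permutation_trans (Permutation_sym H0) E1))
      as [[e Hg]|[G3 [Ha Hb]]].
    + exfalso; apply (HN a); auto.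
    + apply h_nef with (G:=R++G3) (a:=a); auto; [perm_solve|].
      apply (IHhd (Neg a::G3)); perm_solve.
  - destruct (perm_split _ _ _ _ (Permutation_trans (Permutation_sym H0) E1))
      as [[e Hg]|[G3 [Ha Hb]]].
    + exfalso; apply (HN a); auto.
    + apply h_copc with (G:=R++G3) (a:=a); auto; [perm_solve|].
      apply (IHhd (b::Neg a::G3)); perm_solve.
  - apply h_an; auto. apply (IHhd (a::G')); perm_solve.
Qed.

Lemma inv_and : forall n G a b phi, hd n (And a b :: G) phi -> hd n (a::b::G) phi.
Proof.
  intros. eapply (inv_gen (And a b) [a;b]); try eassumption; try apply Permutation_refl;
  try congruence; intros ? ? e; injection e; intros; subst; auto.
Qed.
Lemma inv_orl : forall n G a b phi, hd n (Or a b :: G) phi -> hd n (a::G) phi.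
Proof.
  intros. eapply (inv_gen (Or a b) [a]); try eassumption; try apply Permutation_refl;
  try congruence; intros ? ? e; injection e; intros; subst; auto.
Qed.
Lemma inv_orr : forall n G a b phi, hd n (Or a b :: G) phi -> hd n (b::G) phi.
Proof.
  intros. eapply (inv_gen (Or a b) [b]); try eassumption; try apply Permutation_refl;
  try congruence; intros ? ? e; injection e; intros; subst; auto.
Qed.
Lemma inv_imp : forall n G a b phi, hd n (Imp a b :: G) phi -> hd n (b::G) phi.
Proof.
  intros. eapply (inv_gen (Imp a b) [b]); try eassumption; try apply Permutation_refl;
  try congruence; intros ? ? e; injection e; intros; subst; auto.
Qed.


Lemma perm_split2 : forall (P x : form) G0 G, Permutation (P::G0) (x::x::G) ->
  (P = x /\ Permutation G0 (x::G)) \/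
  (exists G5, Permutation G0 (x::x::G5) /\ Permutation G (P::G5)).
Proof.
  intros P x G0 G H. destruct (perm_split _ _ _ _ H) as [[e Hg]|[G3 [Ha Hb]]].
  - left; auto.
  - destruct (perm_split _ _ _ _ (Permutation_sym Hb)) as [[e Hg]|[G5 [Hc Hd]]].
    + left; split; auto. subst. perm_solve.
    + right; exists G5; split; perm_solve.
Qed.

Lemma contr_aux : forall n m L phi x G, m <= n -> hd m L phi ->
  Permutation L (x::x::G) -> hd m (x::G) phi.
Proof.
  induction n as [|n IH]; intros m L phi x G Hm Hd HP;
  destruct Hd as [| | |? ? ? ? ? ? ? Hd1 Hd2| | | | |? ? ? ? ? ? ? Hd1 Hd2| | | |]; try lia.
  - destruct (perm_split _ _ _ _ (Permutation_trans (Permutation_sym H) HP))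
      as [[e _]|[G3 [Ha Hb]]].
    + subst; apply h_ax with (G:=G); auto.
    + apply h_ax with (G:=G3); perm_solve.
  - apply h_top.
  - destruct (perm_split _ _ _ _ (Permutation_trans (Permutation_sym H) HP))
      as [[e _]|[G3 [Ha Hb]]].
    + subst; apply h_ax with (G:=G); auto.
    + apply h_ax with (G:=G3); perm_solve.
  - apply h_top.
  - apply h_impR. apply hd_perm with (x::a::G); [|perm_solve].
    eapply IH; [lia|eassumption|perm_solve].
  - destruct (perm_split2 _ _ _ _ (Permutation_trans (Permutation_sym H) HP))
      as [[e Hg]|[G5 [Ha Hb]]].
    + subst x. apply h_impL with (G:=G) (a:=a) (b:=b); [auto| |].
      * eapply IH; [lia|eassumption|perm_solve].
      * eapply IH; [lia| |apply Permutation_refl].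
        apply inv_imp with a. apply hd_perm with (b::G0); auto. perm_solve.
    + apply h_impL with (G:=x::G5) (a:=a) (b:=b); [perm_solve| |].
      * apply hd_perm with (x::Imp a b::G5); [|perm_solve].
        eapply IH; [lia|eassumption|perm_solve].
      * apply hd_perm with (x::b::G5); [|perm_solve].
        eapply IH; [lia|eassumption|perm_solve].
  - apply h_andR; (eapply IH; [lia|eassumption|auto]).
  - destruct (perm_split2 _ _ _ _ (Permutation_trans (Permutation_sym H) HP))
      as [[e Hg]|[G5 [Ha Hb]]].
    + subst x. apply h_andL with (G:=G) (a:=a) (b:=b); [auto|].
      assert (H1 : hd n0 (a::b::a::b::G) phi).
      { apply inv_and. apply hd_perm with (a::b::G0); auto. perm_solve. }
      assert (H2 : hd n0 (a::b::b::G) phi).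
      { eapply IH; [lia|exact H1|perm_solve]. }
      assert (H3 : hd n0 (b::a::G) phi).
      { eapply IH; [lia|exact H2|perm_solve]. }
      apply hd_perm with (b::a::G); auto. perm_solve.
    + apply h_andL with (G:=x::G5) (a:=a) (b:=b); [perm_solve|].
      apply hd_perm with (x::a::b::G5); [|perm_solve].
      eapply IH; [lia|eassumption|perm_solve].
  - apply h_orR1; (eapply IH; [lia|eassumption|auto]).
  - apply h_orR2; (eapply IH; [lia|eassumption|auto]).
  - destruct (perm_split2 _ _ _ _ (Permutation_trans (Permutation_sym H) HP))
      as [[e Hg]|[G5 [Ha Hb]]].
    + subst x. apply h_orL with (G:=G) (a:=a) (b:=b); [auto| |].
      * eapply IH; [lia| |apply Permutation_refl].
        apply inv_orl with b. apply hd_perm with (a::G0); auto. perm_solve.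
      * eapply IH; [lia| |apply Permutation_refl].
        apply inv_orr with a. apply hd_perm with (b::G0); auto. perm_solve.
    + apply h_orL with (G:=x::G5) (a:=a) (b:=b); [perm_solve| |].
      * apply hd_perm with (x::a::G5); [|perm_solve].
        eapply IH; [lia|exact Hd1|perm_solve].
      * apply hd_perm with (x::b::G5); [|perm_solve].
        eapply IH; [lia|exact Hd2|perm_solve].
  - destruct (perm_split2 _ _ _ _ (Permutation_trans (Permutation_sym H0) HP))
      as [[e Hg]|[G5 [Ha Hb]]].
    + subst x. apply h_n with (G:=G) (a:=a); auto.
      * apply hd_perm with (Neg a::b::G); [|perm_solve].
        eapply IH; [lia|eassumption|perm_solve].
      * apply hd_perm with (Neg a::a::G); [|perm_solve].
        eapply IH; [lia|eassumption|perm_solve].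
    + apply h_n with (G:=x::G5) (a:=a); auto; [perm_solve| |].
      * apply hd_perm with (x::b::Neg a::G5); [|perm_solve].
        eapply IH; [lia|eassumption|perm_solve].
      * apply hd_perm with (x::a::Neg a::G5); [|perm_solve].
        eapply IH; [lia|eassumption|perm_solve].
  - destruct (perm_split2 _ _ _ _ (Permutation_trans (Permutation_sym H0) HP))
      as [[e Hg]|[G5 [Ha Hb]]].
    + subst x. apply h_nef with (G:=G) (a:=a); auto.
      eapply IH; [lia|eassumption|perm_solve].
    + apply h_nef with (G:=x::G5) (a:=a); auto; [perm_solve|].
      apply hd_perm with (x::Neg a::G5); [|perm_solve].
      eapply IH; [lia|eassumption|perm_solve].
  - destruct (perm_split2 _ _ _ _ (Permutation_trans (Permutation_sym H0) HP))
      as [[e Hg]|[G5 [Ha Hb]]].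
    + subst x. apply h_copc with (G:=G) (a:=a); auto.
      apply hd_perm with (Neg a::b::G); [|perm_solve].
      eapply IH; [lia|eassumption|perm_solve].
    + apply h_copc with (G:=x::G5) (a:=a); auto; [perm_solve|].
      apply hd_perm with (x::b::Neg a::G5); [|perm_solve].
      eapply IH; [lia|eassumption|perm_solve].
  - apply h_an; auto. apply hd_perm with (x::a::G); [|perm_solve].
    eapply IH; [lia|eassumption|perm_solve].
Qed.


Lemma der_perm : forall L L' phi, derivable Sy L phi -> Permutation L L' -> derivable Sy L' phi.
Proof. intros; eapply d_perm; eauto. Qed.

Lemma der_contr : forall x G phi, derivable Sy (x::x::G) phi -> derivable Sy (x::G) phi.
Proof.
  intros x G phi H. apply der_hd in H as [n H]. apply hd_der with n.
  eapply contr_aux; eauto.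
Qed.

Lemma der_contr_list : forall M G phi, derivable Sy (M ++ M ++ G) phi -> derivable Sy (M ++ G) phi.
Proof.
  induction M as [|x M IH]; intros G phi H; simpl in *.
  - exact H.
  - apply der_perm with (M ++ x :: G); [|perm_solve].
    apply IH. apply der_perm with (x :: (M ++ M ++ G)); [|perm_solve].
    apply der_contr. eapply der_perm; [exact H|perm_solve].
Qed.

Lemma der_weak : forall M G phi, derivable Sy G phi -> derivable Sy (M ++ G) phi.
Proof.
  intros M G phi H. apply der_hd in H as [n H]. apply hd_der with n.
  induction M; simpl; auto. apply hd_weak; auto.
Qed.

Lemma der_weak_r : forall M G phi, derivable Sy G phi -> derivable Sy (G ++ M) phi.
Proof.
  intros. apply der_perm with (M ++ G); [apply der_weak; auto|perm_solve].
Qed.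

Definition cutP (al : form) := forall Gm Dl phi, derivable Sy Gm al ->
  derivable Sy (al::Dl) phi -> derivable Sy (Gm++Dl) phi.
Definition cutH (al : form) m := forall n1 n2 Gm L Dl phi, n1 + n2 < m ->
  hd n1 Gm al -> hd n2 L phi -> Permutation L (al::Dl) -> derivable Sy (Gm++Dl) phi.

Lemma cut_d1_impL : forall al m n n2 Gm G a b L Dl phi, cutH al m ->
  Permutation Gm (Imp a b :: G) -> hd n (Imp a b :: G) a -> hd n (b::G) al ->
  hd n2 L phi -> Permutation L (al::Dl) -> n + n2 < m -> derivable Sy (Gm++Dl) phi.
Proof.
  intros al m n n2 Gm G a b L Dl phi IH HP H1 H2 H3 HL Hlt.
  assert (X := IH n n2 (b::G) L Dl phi Hlt H2 H3 HL).
  apply der_perm with (Imp a b :: (G ++ Dl)); [|perm_solve].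
  apply d_impL.
  - apply der_perm with ((Imp a b :: G) ++ Dl); [|perm_solve].
    apply der_weak_r. eapply hd_der; eauto.
  - exact X.
Qed.

Lemma cut_d1_andL : forall al m n n2 Gm G a b L Dl phi, cutH al m ->
  Permutation Gm (And a b :: G) -> hd n (a::b::G) al ->
  hd n2 L phi -> Permutation L (al::Dl) -> n + n2 < m -> derivable Sy (Gm++Dl) phi.
Proof.
  intros al m n n2 Gm G a b L Dl phi IH HP H2 H3 HL Hlt.
  assert (X := IH n n2 (a::b::G) L Dl phi Hlt H2 H3 HL).
  apply der_perm with (And a b :: (G ++ Dl)); [|perm_solve].
  apply d_andL. exact X.
Qed.

Lemma cut_d1_orL : forall al m n n2 Gm G a b L Dl phi, cutH al m ->
  Permutation Gm (Or a b :: G) -> hd n (a::G) al -> hd n (b::G) al ->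
  hd n2 L phi -> Permutation L (al::Dl) -> n + n2 < m -> derivable Sy (Gm++Dl) phi.
Proof.
  intros al m n n2 Gm G a b L Dl phi IH HP H1 H2 H3 HL Hlt.
  assert (X1 := IH n n2 (a::G) L Dl phi Hlt H1 H3 HL).
  assert (X2 := IH n n2 (b::G) L Dl phi Hlt H2 H3 HL).
  apply der_perm with (Or a b :: (G ++ Dl)); [|perm_solve].
  apply d_orL; auto.
Qed.


Ltac d1left IHm D2 :=
  first
  [ subst; eapply cut_d1_impL; [exact IHm|eassumption|eassumption|eassumption|exact D2|apply Permutation_refl|lia]
  | subst; eapply cut_d1_andL; [exact IHm|eassumption|eassumption|exact D2|apply Permutation_refl|lia]
  | subst; eapply cut_d1_orL; [exact IHm|eassumption|eassumption|eassumption|exact D2|apply Permutation_refl|lia] ].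

Lemma contr_app : forall M phi, derivable Sy (M ++ M) phi -> derivable Sy M phi.
Proof.
  intros M phi H. rewrite <- (app_nil_r M). apply der_contr_list.
  rewrite app_nil_r. exact H.
Qed.

Lemma P_imp : forall m n1 k Gm Dl a b phi, cutH (Imp a b) m -> cutP a -> cutP b ->
  hd n1 Gm (Imp a b) -> hd k (Imp a b :: Dl) a -> hd k (b::Dl) phi -> n1 + S k = m ->
  derivable Sy (Gm ++ Dl) phi.
Proof.
  intros m n1 k Gm Dl a b phi IHm Ca Cb Hd1 P1 P2 Hm.
  assert (D2 : hd (S k) (Imp a b :: Dl) phi) by (eapply h_impL; [apply Permutation_refl|eauto|eauto]).
  revert Hm. remember (Imp a b) as al eqn:E.
  destruct Hd1 as [n' L' G' p HP | n' L' | n' G' c d H1 | n' L' G' c d ph HP H1 H2 | n' G' c d H1 H2 | n' L' G' c d ph HP H1 | n' G' c d H1 | n' G' c d H1 | n' L' G' c d ph HP H1 H2 | n' L' G' c d Hf HP H1 H2 | n' L' G' c d Hf HP H1 | n' L' G' c d Hf HP H1 | n' G' c Hf H1]; intro Hm; try discriminate; try (d1left IHm D2).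
  injection E as E1 E2; subst c d.
  assert (X := IHm (S n') k G' (Imp a b :: Dl) Dl a ltac:(lia) (h_impR _ _ _ _ H1) P1 (Permutation_refl _)).
  assert (Y := Ca _ _ _ X (hd_der _ _ _ H1)).
  assert (Z := Cb _ _ _ Y (hd_der _ _ _ P2)).
  apply contr_app. eapply der_perm; [exact Z|perm_solve].
Qed.

Lemma P_and : forall m n1 k Gm Dl a b phi, cutH (And a b) m -> cutP a -> cutP b ->
  hd n1 Gm (And a b) -> hd k (a :: b :: Dl) phi -> n1 + S k = m ->
  derivable Sy (Gm ++ Dl) phi.
Proof.
  intros m n1 k Gm Dl a b phi IHm Ca Cb Hd1 P1 Hm.
  assert (D2 : hd (S k) (And a b :: Dl) phi) by (eapply h_andL; [apply Permutation_refl|eauto]).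
  revert Hm. remember (And a b) as al eqn:E.
  destruct Hd1 as [n' L' G' p HP | n' L' | n' G' c d H1 | n' L' G' c d ph HP H1 H2 | n' G' c d H1 H2 | n' L' G' c d ph HP H1 | n' G' c d H1 | n' G' c d H1 | n' L' G' c d ph HP H1 H2 | n' L' G' c d Hf HP H1 H2 | n' L' G' c d Hf HP H1 | n' L' G' c d Hf HP H1 | n' G' c Hf H1]; intro Hm; try discriminate; try (d1left IHm D2).
  injection E as E1 E2; subst c d.
  assert (X := Ca _ _ _ (hd_der _ _ _ H1) (hd_der _ _ _ P1)).
  assert (Y := Cb G' (G' ++ Dl) phi (hd_der _ _ _ H2) ltac:(eapply der_perm; [exact X|perm_solve])).
  apply der_contr_list. exact Y.
Qed.

Lemma P_or : forall m n1 k Gm Dl a b phi, cutH (Or a b) m -> cutP a -> cutP b ->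
  hd n1 Gm (Or a b) -> hd k (a :: Dl) phi -> hd k (b :: Dl) phi -> n1 + S k = m ->
  derivable Sy (Gm ++ Dl) phi.
Proof.
  intros m n1 k Gm Dl a b phi IHm Ca Cb Hd1 P1 P2 Hm.
  assert (D2 : hd (S k) (Or a b :: Dl) phi) by (eapply h_orL; [apply Permutation_refl|eauto|eauto]).
  revert Hm. remember (Or a b) as al eqn:E.
  destruct Hd1 as [n' L' G' p HP | n' L' | n' G' c d H1 | n' L' G' c d ph HP H1 H2 | n' G' c d H1 H2 | n' L' G' c d ph HP H1 | n' G' c d H1 | n' G' c d H1 | n' L' G' c d ph HP H1 H2 | n' L' G' c d Hf HP H1 H2 | n' L' G' c d Hf HP H1 | n' L' G' c d Hf HP H1 | n' G' c Hf H1]; intro Hm; try discriminate; try (d1left IHm D2).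
  - injection E as E1 E2; subst c d. exact (Ca _ _ _ (hd_der _ _ _ H1) (hd_der _ _ _ P1)).
  - injection E as E1 E2; subst c d. exact (Cb _ _ _ (hd_der _ _ _ H1) (hd_der _ _ _ P2)).
Qed.


Lemma fl1 : has_n Sy = true -> has_copc Sy = true -> False.
Proof. destruct Sy; simpl; congruence. Qed.
Lemma fl2 : has_n Sy = true -> has_an Sy = true -> False.
Proof. destruct Sy; simpl; congruence. Qed.
Lemma fl3 : has_nef Sy = true -> has_copc Sy = true -> False.
Proof. destruct Sy; simpl; congruence. Qed.
Lemma fl4 : has_nef Sy = true -> has_an Sy = true -> False.
Proof. destruct Sy; simpl; congruence. Qed.

Ltac flags := exfalso; solve [eauto using fl1, fl2, fl3, fl4].

Lemma contr_perm : forall M G T T' phi, derivable Sy T phi ->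
  Permutation T (M++M++G) -> Permutation (M++G) T' -> derivable Sy T' phi.
Proof.
  intros. eapply der_perm; [|eassumption]. apply der_contr_list.
  eapply der_perm; eassumption.
Qed.

Ltac useIH IHm R P D := eapply IHm with (Dl := D); [ | exact R | exact P | ]; [lia | perm_solve].

Lemma P_negn : forall m n1 k Gm Dl a b, has_n Sy = true -> cutH (Neg a) m -> cutP a ->
  hd n1 Gm (Neg a) -> hd k (b :: Neg a :: Dl) a -> hd k (a :: Neg a :: Dl) b -> n1 + S k = m ->
  derivable Sy (Gm ++ Dl) (Neg b).
Proof.
  intros m n1 k Gm Dl a b Hn IHm Ca Hd1 P1 P2 Hm.
  assert (D2 : hd (S k) (Neg a :: Dl) (Neg b)) by (eapply h_n; [auto|apply Permutation_refl|eauto|eauto]).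
  revert Hm. remember (Neg a) as al eqn:E.
  destruct Hd1 as [n' L' G' p HP | n' L' | n' G' c d H1 | n' L' G' c d ph HP H1 H2 | n' G' c d H1 H2 | n' L' G' c d ph HP H1 | n' G' c d H1 | n' G' c d H1 | n' L' G' c d ph HP H1 H2 | n' L' G' c d Hf HP H1 H2 | n' L' G' c d Hf HP H1 | n' L' G' c d Hf HP H1 | n' G' c Hf H1]; intro Hm; try discriminate; try (d1left IHm D2);
  injection E as E1; try (subst d); try (subst c); try flags.
  - assert (R := h_n _ _ _ _ _ Hf HP H1 H2).
    assert (X1 : derivable Sy (L' ++ b::Dl) a) by useIH IHm R P1 (b::Dl).
    assert (Y1 := Ca _ _ _ X1 (hd_der _ _ _ H1)).
    assert (X2 : derivable Sy (L' ++ a::Dl) b) by useIH IHm R P2 (a::Dl).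
    assert (Y2 := Ca (c::Neg c::G') (L' ++ Dl) b (hd_der _ _ _ H2)
       ltac:(eapply der_perm; [exact X2|perm_solve])).
    apply der_perm with (Neg c :: (G' ++ Dl)); [|perm_solve].
    apply d_n; auto.
    + apply (contr_perm (Neg c :: G') (b::Dl) _ _ _ Y1); perm_solve.
    + apply (contr_perm (Neg c :: G') (c::Dl) _ _ _ Y2); perm_solve.
  - apply der_perm with (Neg c :: (G' ++ Dl)); [|perm_solve].
    apply d_nef; auto. apply der_weak_r with (G := Neg c :: G'). eapply hd_der; eauto.
Qed.

Lemma P_negnef : forall m n1 k Gm Dl a b, has_nef Sy = true -> cutH (Neg a) m -> cutP a ->
  hd n1 Gm (Neg a) -> hd k (Neg a :: Dl) a -> n1 + S k = m ->
  derivable Sy (Gm ++ Dl) (Neg b).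
Proof.
  intros m n1 k Gm Dl a b Hn IHm Ca Hd1 P1 Hm.
  assert (D2 : hd (S k) (Neg a :: Dl) (Neg b)) by (eapply h_nef; [auto|apply Permutation_refl|eauto]).
  revert Hm. remember (Neg a) as al eqn:E.
  destruct Hd1 as [n' L' G' p HP | n' L' | n' G' c d H1 | n' L' G' c d ph HP H1 H2 | n' G' c d H1 H2 | n' L' G' c d ph HP H1 | n' G' c d H1 | n' G' c d H1 | n' L' G' c d ph HP H1 H2 | n' L' G' c d Hf HP H1 H2 | n' L' G' c d Hf HP H1 | n' L' G' c d Hf HP H1 | n' G' c Hf H1]; intro Hm; try discriminate; try (d1left IHm D2);
  injection E as E1; try (subst d); try (subst c); try flags.
  - assert (R := h_n _ _ _ _ _ Hf HP H1 H2).
    assert (X : derivable Sy (L' ++ Dl) a) by useIH IHm R P1 Dl.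
    assert (Y := Ca _ _ _ X (hd_der _ _ _ H1)).
    apply der_perm with (Neg c :: (G' ++ Dl)); [|perm_solve].
    apply d_nef; auto.
    apply (contr_perm (Neg c :: G') Dl _ _ _ Y); perm_solve.
  - apply der_perm with (Neg c :: (G' ++ Dl)); [|perm_solve].
    apply d_nef; auto. apply der_weak_r with (G := Neg c :: G'). eapply hd_der; eauto.
Qed.

Lemma P_negcopc : forall m n1 k Gm Dl a b, has_copc Sy = true -> cutH (Neg a) m -> cutP a ->
  hd n1 Gm (Neg a) -> hd k (b :: Neg a :: Dl) a -> n1 + S k = m ->
  derivable Sy (Gm ++ Dl) (Neg b).
Proof.
  intros m n1 k Gm Dl a b Hn IHm Ca Hd1 P1 Hm.
  assert (D2 : hd (S k) (Neg a :: Dl) (Neg b)) by (eapply h_copc; [auto|apply Permutation_refl|eauto]).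
  revert Hm. remember (Neg a) as al eqn:E.
  destruct Hd1 as [n' L' G' p HP | n' L' | n' G' c d H1 | n' L' G' c d ph HP H1 H2 | n' G' c d H1 H2 | n' L' G' c d ph HP H1 | n' G' c d H1 | n' G' c d H1 | n' L' G' c d ph HP H1 H2 | n' L' G' c d Hf HP H1 H2 | n' L' G' c d Hf HP H1 | n' L' G' c d Hf HP H1 | n' G' c Hf H1]; intro Hm; try discriminate; try (d1left IHm D2);
  injection E as E1; try (subst d); try (subst c); try flags.
  - assert (R := h_copc _ _ _ _ _ Hf HP H1).
    assert (X : derivable Sy (L' ++ b::Dl) a) by useIH IHm R P1 (b::Dl).
    assert (Y := Ca _ _ _ X (hd_der _ _ _ H1)).
    apply der_perm with (Neg c :: (G' ++ Dl)); [|perm_solve].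
    apply d_copc; auto.
    apply (contr_perm (Neg c :: G') (b::Dl) _ _ _ Y); perm_solve.
  - assert (R := h_an _ _ _ Hf H1).
    assert (Y : derivable Sy ((a::G') ++ Dl) (Neg b)) by useIH IHm H1 D2 Dl.
    assert (X : derivable Sy (G' ++ b::Dl) a) by useIH IHm R P1 (b::Dl).
    assert (Z := Ca _ _ _ X Y).
    apply d_an; auto.
    apply (contr_perm (G' ++ Dl) [b] _ _ _ Z); perm_solve.
Qed.


Fixpoint fsize (f : form) : nat :=
  match f with
  | Var _ | Top => 1
  | And a b | Or a b | Imp a b => S (fsize a + fsize b)
  | Neg a => S (fsize a)
  end.

Ltac sub IHs := apply IHs; simpl; lia.

Lemma cut_step : forall al m, (forall b, fsize b < fsize al -> cutP b) -> cutH al m ->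
  forall n1 n2 Gm L Dl phi, n1 + n2 = m -> hd n1 Gm al -> hd n2 L phi ->
  Permutation L (al::Dl) -> derivable Sy (Gm++Dl) phi.
Proof.
  intros al m IHs IHm n1 n2 Gm L Dl phi Hm Hd1 Hd2 HL. revert Hm HL.
  destruct Hd2 as [n' L' G' p HP | n' L' | n' G' c d H1 | n' L' G' c d ph HP H1 H2 | n' G' c d H1 H2 | n' L' G' c d ph HP H1 | n' G' c d H1 | n' G' c d H1 | n' L' G' c d ph HP H1 H2 | n' L' G' c d Hf HP H1 H2 | n' L' G' c d Hf HP H1 | n' L' G' c d Hf HP H1 | n' G' c Hf H1]; intros Hm HL.
  - destruct (perm_split _ _ _ _ (Permutation_trans (Permutation_sym HP) HL))
      as [[e Hg]|[G3 [Ha Hb]]].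
    + subst al. apply der_weak_r. eapply hd_der; eauto.
    + apply der_perm with (Var p :: (Gm ++ G3)); [apply d_ax | perm_solve].
  - apply d_top.
  - assert (X : derivable Sy (Gm ++ c::Dl) d) by useIH IHm Hd1 H1 (c::Dl).
    apply d_impR; eapply der_perm; [exact X|perm_solve].
  - destruct (perm_split _ _ _ _ (Permutation_trans (Permutation_sym HP) HL))
      as [[e Hg]|[G3 [Ha Hb]]].
    + subst al. apply der_perm with (Gm ++ G'); [|perm_solve].
      eapply P_imp; [exact IHm | sub IHs | sub IHs | exact Hd1 | exact H1 | exact H2 | lia].
    + assert (X1 : derivable Sy (Gm ++ Imp c d :: G3) c) by useIH IHm Hd1 H1 (Imp c d :: G3).
      assert (X2 : derivable Sy (Gm ++ d :: G3) ph) by useIH IHm Hd1 H2 (d :: G3).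
      apply der_perm with (Imp c d :: (Gm ++ G3)); [|perm_solve].
      apply d_impL; (eapply der_perm; [eassumption|perm_solve]).
  - assert (X1 : derivable Sy (Gm ++ Dl) c) by useIH IHm Hd1 H1 Dl.
    assert (X2 : derivable Sy (Gm ++ Dl) d) by useIH IHm Hd1 H2 Dl.
    apply d_andR; auto.
  - destruct (perm_split _ _ _ _ (Permutation_trans (Permutation_sym HP) HL))
      as [[e Hg]|[G3 [Ha Hb]]].
    + subst al. apply der_perm with (Gm ++ G'); [|perm_solve].
      eapply P_and; [exact IHm | sub IHs | sub IHs | exact Hd1 | exact H1 | lia].
    + assert (X : derivable Sy (Gm ++ c :: d :: G3) ph) by useIH IHm Hd1 H1 (c :: d :: G3).
      apply der_perm with (And c d :: (Gm ++ G3)); [|perm_solve].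
      apply d_andL; (eapply der_perm; [eassumption|perm_solve]).
  - assert (X1 : derivable Sy (Gm ++ Dl) c) by useIH IHm Hd1 H1 Dl.
    apply d_orR1; auto.
  - assert (X1 : derivable Sy (Gm ++ Dl) d) by useIH IHm Hd1 H1 Dl.
    apply d_orR2; auto.
  - destruct (perm_split _ _ _ _ (Permutation_trans (Permutation_sym HP) HL))
      as [[e Hg]|[G3 [Ha Hb]]].
    + subst al. apply der_perm with (Gm ++ G'); [|perm_solve].
      eapply P_or; [exact IHm | sub IHs | sub IHs | exact Hd1 | exact H1 | exact H2 | lia].
    + assert (X1 : derivable Sy (Gm ++ c :: G3) ph) by useIH IHm Hd1 H1 (c :: G3).
      assert (X2 : derivable Sy (Gm ++ d :: G3) ph) by useIH IHm Hd1 H2 (d :: G3).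
      apply der_perm with (Or c d :: (Gm ++ G3)); [|perm_solve].
      apply d_orL; [eapply der_perm; [exact X1|perm_solve] | eapply der_perm; [exact X2|perm_solve]].
  - destruct (perm_split _ _ _ _ (Permutation_trans (Permutation_sym HP) HL))
      as [[e Hg]|[G3 [Ha Hb]]].
    + subst al. apply der_perm with (Gm ++ G'); [|perm_solve].
      eapply P_negn; [exact Hf | exact IHm | sub IHs | exact Hd1 | exact H1 | exact H2 | lia].
    + assert (X1 : derivable Sy (Gm ++ d :: Neg c :: G3) c) by useIH IHm Hd1 H1 (d :: Neg c :: G3).
      assert (X2 : derivable Sy (Gm ++ c :: Neg c :: G3) d) by useIH IHm Hd1 H2 (c :: Neg c :: G3).
      apply der_perm with (Neg c :: (Gm ++ G3)); [|perm_solve].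
      apply d_n; auto; (eapply der_perm; [eassumption|perm_solve]).
  - destruct (perm_split _ _ _ _ (Permutation_trans (Permutation_sym HP) HL))
      as [[e Hg]|[G3 [Ha Hb]]].
    + subst al. apply der_perm with (Gm ++ G'); [|perm_solve].
      eapply P_negnef; [exact Hf | exact IHm | sub IHs | exact Hd1 | exact H1 | lia].
    + assert (X1 : derivable Sy (Gm ++ Neg c :: G3) c) by useIH IHm Hd1 H1 (Neg c :: G3).
      apply der_perm with (Neg c :: (Gm ++ G3)); [|perm_solve].
      apply d_nef; auto; (eapply der_perm; [eassumption|perm_solve]).
  - destruct (perm_split _ _ _ _ (Permutation_trans (Permutation_sym HP) HL))
      as [[e Hg]|[G3 [Ha Hb]]].
    + subst al. apply der_perm with (Gm ++ G'); [|perm_solve].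
      eapply P_negcopc; [exact Hf | exact IHm | sub IHs | exact Hd1 | exact H1 | lia].
    + assert (X1 : derivable Sy (Gm ++ d :: Neg c :: G3) c) by useIH IHm Hd1 H1 (d :: Neg c :: G3).
      apply der_perm with (Neg c :: (Gm ++ G3)); [|perm_solve].
      apply d_copc; auto; (eapply der_perm; [eassumption|perm_solve]).
  - assert (X : derivable Sy (Gm ++ c :: Dl) (Neg c)) by useIH IHm Hd1 H1 (c :: Dl).
    apply d_an; auto. eapply der_perm; [exact X|perm_solve].
Qed.

Lemma cut_all : forall s al, fsize al <= s -> cutP al.
Proof.
  induction s as [|s IHs]; intros al Hs.
  - destruct al; simpl in Hs; lia.
  - assert (IHs' : forall b, fsize b < fsize al -> cutP b) by (intros; apply IHs; lia).
    assert (Hall : forall m, cutH al m).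
    { induction m as [|m IHm].
      - intros n1 n2 Gm L Dl phi Hlt; lia.
      - intros n1 n2 Gm L Dl phi Hlt H1 H2 HL.
        destruct (Nat.eq_dec (n1 + n2) m) as [e|ne].
        + eapply cut_step; eauto.
        + eapply IHm; eauto; lia. }
    intros Gm Dl phi D1 D2.
    apply der_hd in D1 as [n1 D1]. apply der_hd in D2 as [n2 D2].
    eapply (Hall (S (n1 + n2))) with (L := al :: Dl); [ | exact D1 | exact D2 | apply Permutation_refl]; lia.
Qed.

End H.

Theorem theorem4p1 : forall (S : system) (Gamma Delta : list form) (alpha phi : form),
  derivable S Gamma alpha ->
  derivable S (alpha :: Delta) phi ->
  derivable S (Gamma ++ Delta) phi.
Proof.
  intros Sy Gamma Delta alpha phi H1 H2.
  exact (cut_all Sy (fsize alpha) alpha (le_n _) Gamma Delta phi H1 H2).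
Qed.
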